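(* Let $\kappa$ be a regular infinite cardinal, $I$ a nonempty set, $(S,\Sigma_S)$ a $\kappa$-measurable space separating points. The $\kappa$-description map $D:\Omega\to\Omega$ of the $\kappa$-type space $\langle\Omega,\Sigma_\Omega,(T_i^* )_{i\in I},\theta^*\rangle$ is the identity.
   Context: A $\kappa$-field on a nonempty set is a field closed under intersections of fewer than $\kappa$ members. $\Delta^\kappa(M,\Sigma)$: finitely additive probability measures on $(M,\Sigma)$ with the $\kappa$-field generated by $\{\mu:\mu(E)\ge p\}$. ''Separating points'': for $s\neq s'$ in $S$ some $E\in\Sigma_S$ contains $s$ but not $s'$. A $\kappa$-type space on $S$ for $I$ is $\langle M,\Sigma,(T_i)_{i\in I},\theta\rangle$ with $\Sigma$ a $\kappa$-field on nonempty $M$, each $T_i:M\to\Delta^\kappa(M,\Sigma)$ measurable with: $\{m':T_i(m')=T_i(m)\}\subseteq A\in\Sigma$ implies $T_i(m)(A)=1$; and $\theta:M\to S$ measurable. $\kappa$-expressions $\Phi^\kappa$: least set containing each $E\in\Sigma_S$ and closed under $\neg$, $B_i^p$ ($i\in I$, $p\in[0,1]$), and conjunctions of fewer than $\kappa$ (nonempty) expressions. Semantics: $E^{\underline M}=\theta^{-1}(E)$, complement, $(B_i^p\varphi)^{\underline M}=\{m:T_i(m)(\varphi^{\underline M})\ge p\}$, intersection. $D(m)=\{\varphi:m\in\varphi^{\underline M}\}$ is the $\kappa$-description of $m$. $\Omega$ = set of all $D(m)$ over all states of all $\kappa$-type spaces on $S$ for $I$; $[\varphi]=\{\omega\in\Omega:\varphi\in\omega\}$;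 $\Sigma_\Omega=\{[\varphi]\}$; $T_i^*(\omega)([\varphi])=\sup\{p:B_i^p(\varphi)\in\omega\}$; $\theta^*(\omega)$ the unique $s\in S$ lying in every $E\in\Sigma_S\cap\omega$. This tuple is a $\kappa$-type space on $S$ for $I$. *)

(* Defs.v *)
From HB Require Import structures.
From mathcomp Require Import all_boot all_order all_algebra.
From mathcomp Require Import boolp classical_sets functions cardinality reals.
From Stdlib Require Import ClassicalEpsilon.
Unset Printing Implicit Defensive.
Import Order.TTheory GRing.Theory Num.Theory.
Local Open Scope classical_set_scope.
Local Open Scope ring_scope.
Local Open Scope card_scope.

Definition card_lt {T U} (A : set T) (B : set U) := A #<= B /\ ~ (B #<= A).

(** The cardinal kappa is represented as the cardinality of a type [K]:
    "fewer than kappa" means "of cardinality strictly less than |K|". *)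
Definition lt_kappa (K : Type) {T} (A : set T) := card_lt A [set: K].

Definition regular_infinite_cardinal (K : Type) :=
  infinite_set [set: K] /\
  forall (J : set K) (X : K -> set K),
    lt_kappa K J -> (forall j, J j -> lt_kappa K (X j)) ->
    lt_kappa K (\bigcup_(j in J) X j).

(** Families of size < kappa are indexed by
    subsets of K of size < kappa. *)
Definition kfield (K : Type) {T} (X : set T) (F : set (set T)) :=
  [/\ X !=set0,
      (forall E, F E -> E `<=` X),
      F X,
      (forall E, F E -> F (X `\` E)) &
      (forall (A : set K) (G : K -> set T), A !=set0 -> lt_kappa K A ->
         (forall a, A a -> F (G a)) -> F (\bigcap_(a in A) G a))].

Definition kgen (K : Type) {T} (X : set T) (G : set (set T)) : set (set T) :=
  [set E | forall F, kfield K X F -> G `<=` F -> F E].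

(** Finitely additive probability measures on (M, Sig), represented as
    functions on all subsets of M vanishing outside Sig (so that they are
    determined by their values on Sig). *)
Definition fa_prob {R : realType} {M : Type} (Sig : set (set M))
    (mu : set M -> R) :=
  [/\ mu setT = 1,
      (forall E, Sig E -> 0 <= mu E),
      (forall E F, Sig E -> Sig F -> E `&` F = set0 -> mu (E `|` F) = mu E + mu F) &
      (forall E, ~ Sig E -> mu E = 0)].

Definition Delta (R : realType) {M : Type} (Sig : set (set M)) : set (set M -> R) :=
  [set mu | fa_prob Sig mu].

Definition Delta_gens (R : realType) {M : Type} (Sig : set (set M))
  : set (set (set M -> R)) :=
  [set Y | exists E (p : R), [/\ Sig E, 0 <= p <= 1 &
           Y = [set mu | Delta R Sig mu /\ p <= mu E]]].

Definition Delta_field (K : Type) (R : realType) {M : Type} (Sig : set (set M)) :=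
  kgen K (Delta R Sig) (Delta_gens R Sig).

Definition ktype_space (K : Type) {R : realType} {S : Type} (SigS : set (set S))
    {I : Type} {M : Type} (Sig : set (set M)) (T : I -> M -> set M -> R)
    (theta : M -> S) :=
  [/\ kfield K [set: M] Sig,
      (forall i m, Delta R Sig (T i m)),
      (forall i Y, Delta_field K R Sig Y -> Sig (T i @^-1` Y)),
      (forall i m A, Sig A -> [set m' | T i m' = T i m] `<=` A -> T i m A = 1) &
      (forall E, SigS E -> Sig (theta @^-1` E))].

Inductive kexpr (K : Type) (R : realType) (S : Type) (I : Type) : Type :=
| Atom of set S
| Neg of kexpr K R S I
| Bel of I & R & kexpr K R S I
| Conj of set K & (K -> kexpr K R S I).

Arguments Atom {K R S I}.
Arguments Neg {K R S I}.
Arguments Bel {K R S I}.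
Arguments Conj {K R S I}.

Inductive wf_expr {K : Type} {R : realType} {S : Type} (SigS : set (set S))
    {I : Type} : kexpr K R S I -> Prop :=
| wf_Atom E : SigS E -> wf_expr SigS (Atom E)
| wf_Neg phi : wf_expr SigS phi -> wf_expr SigS (Neg phi)
| wf_Bel i p phi : 0 <= p <= 1 -> wf_expr SigS phi -> wf_expr SigS (Bel i p phi)
| wf_Conj (A : set K) f : A !=set0 -> lt_kappa K A ->
    (forall a, A a -> wf_expr SigS (f a)) -> wf_expr SigS (Conj A f).

Fixpoint sem {K : Type} {R : realType} {S I M : Type} (T : I -> M -> set M -> R)
    (theta : M -> S) (phi : kexpr K R S I) : set M :=
  match phi with
  | Atom E => theta @^-1` E
  | Neg psi => ~` sem T theta psi
  | Bel i p psi => [set m | p <= T i m (sem T theta psi)]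
  | Conj A f => [set m | forall a, A a -> sem T theta (f a) m]
  end.

Definition descr {K : Type} {R : realType} {S : Type} (SigS : set (set S))
    {I M : Type} (T : I -> M -> set M -> R) (theta : M -> S) (m : M)
  : set (kexpr K R S I) :=
  [set phi | wf_expr SigS phi /\ sem T theta phi m].

Definition Omega (K : Type) (R : realType) {S : Type} (SigS : set (set S))
    (I : Type) : set (set (kexpr K R S I)) :=
  [set w | exists (M : Type) (Sig : set (set M)) (T : I -> M -> set M -> R)
             (theta : M -> S),
           ktype_space K SigS Sig T theta /\ exists m : M, w = descr SigS T theta m].

Definition OmegaT (K : Type) (R : realType) {S : Type} (SigS : set (set S))
    (I : Type) := {w : set (kexpr K R S I) | Omega K R SigS I w}.

Definition brk {K : Type} {R : realType} {S : Type} {SigS : set (set S)}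
    {I : Type} (phi : kexpr K R S I) : set (OmegaT K R SigS I) :=
  [set w | proj1_sig w phi].

Definition SigOmega (K : Type) (R : realType) {S : Type} (SigS : set (set S))
    (I : Type) : set (set (OmegaT K R SigS I)) :=
  [set A | exists phi, wf_expr SigS phi /\ A = brk phi].

(** T_i^*(w)([phi]) = sup {p : B_i^p phi in w}; (well-definedness of this
    on [phi] is part of the paper's claim that the tuple is a type space;
    here the sup ranges over all phi with [phi] = A, and is sup(set0) = 0
    for A outside Sigma_Omega). *)
Definition Tstar (K : Type) (R : realType) {S : Type} (SigS : set (set S))
    (I : Type) (i : I) (w : OmegaT K R SigS I) (A : set (OmegaT K R SigS I)) : R :=
  sup [set p : R | exists phi, [/\ wf_expr SigS phi, A = brk phi &
                                  proj1_sig w (Bel i p phi)]].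

Lemma Omega_inhabited {K : Type} {R : realType} {S : Type} {SigS : set (set S)}
    {I : Type} (w : OmegaT K R SigS I) : inhabited S.
Proof.
case: w => w [M [Sig [T [theta [_ [m _]]]]]]; exact: (inhabits (theta m)).
Qed.

Definition thetastar (K : Type) (R : realType) {S : Type} (SigS : set (set S))
    (I : Type) (w : OmegaT K R SigS I) : S :=
  epsilon (Omega_inhabited w)
    (fun s => forall E, SigS E -> proj1_sig w (Atom E) -> E s).

Definition separates_points {S : Type} (SigS : set (set S)) :=
  forall s s' : S, s <> s' -> exists E, [/\ SigS E, E s & ~ E s'].

(* Main.v *)
Require Import Defs.
From mathcomp Require Import all_boot all_order all_algebra.
From mathcomp Require Import boolp classical_sets functions cardinality reals.
From Stdlib Require Import ClassicalEpsilon.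
Import Order.TTheory GRing.Theory Num.Theory.
Local Open Scope classical_set_scope.
Local Open Scope ring_scope.

Theorem lemma6 (K : Type) (R : realType) (I : Type) (S : Type)
    (SigS : set (set S)) :
  regular_infinite_cardinal K ->
  inhabited I ->
  kfield K [set: S] SigS ->
  separates_points SigS ->
  forall w : OmegaT K R SigS I,
    descr SigS (Tstar K R SigS I) (thetastar K R SigS I) w = proj1_sig w.
Proof.
move=> _ _ _ Hsep.
have key : forall phi : kexpr K R S I, wf_expr SigS phi ->
  forall w : OmegaT K R SigS I,
    sem (Tstar K R SigS I) (thetastar K R SigS I) phi w <-> proj1_sig w phi.
  move=> phi0 Hphi0; elim: Hphi0 => [E HE | psi Hpsi IH | i p psi Hp Hpsi IH | A f HA HAk Hf IH] w;
  case: w => x Hx; have [M [Sig [T [theta [Hts [m Ex]]]]]] := Hx; subst x => /=.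
  - have -> : thetastar K R SigS I (exist _ _ Hx) = theta m.
      rewrite /thetastar /=.
      set P := fun s => forall E0, SigS E0 -> _ -> E0 s.
      have PT : P (theta m) by move=> E0 _ [_ h].
      have := epsilon_spec (Omega_inhabited (exist _ _ Hx)) P (ex_intro _ _ PT).
      set s := epsilon _ _ => Ps.
      case: (pselect (s = theta m)) => // Hne.
      have [E' [HE' h1 h2]] := Hsep (theta m) s (nesym Hne).
      by exfalso; apply: h2; move: (Ps E' HE'); apply; split; [exact: wf_Atom HE' | exact: h1].
    rewrite /descr /=; split; [move=> h; split => //; exact: wf_Atom HE | by case].
  - rewrite /descr /=.
    have := IH (exist _ _ Hx); rewrite /descr /= => {}IH.
    split.
    + move=> h; split; first exact: wf_Neg.
      by move=> hs; apply: h; apply/IH.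
    + by move=> [_ h] hs; apply: h; have [] := (IH.1 hs).
  - have Esem : sem (Tstar K R SigS I) (thetastar K R SigS I) psi = brk psi.
      by apply/funext => w'; apply/propext; rewrite /brk /=; apply: IH.
    rewrite /= Esem /Tstar /descr /=.
    set t := T i m (sem T theta psi).
    have t0 : 0 <= t.
      have [_ h0 _ h1] := (let: And5 _ h _ _ _ := Hts in h) i m.
      case: (pselect (Sig (sem T theta psi))) => hs; first exact: h0.
      by rewrite /t h1.
    set Sx := [set q : R | _].
    have HS : Sx = [set q | 0 <= q <= 1 /\ q <= t].
      apply/seteqP; split => q.
      - move=> [phi [wphi Eb [hw hq]]].
        inversion hw; subst.
        have Ess : sem T theta phi = sem T theta psi.
          apply/funext => m'; apply/propext.
          have Hm' : Omega K R SigS I (descr SigS T theta m').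
            by exists M, Sig, T, theta; split => //; exists m'.
          have := congr1 (fun B => B (exist _ _ Hm')) Eb.
          rewrite /brk /descr /= => e.
          split => h.
          * have : (wf_expr SigS phi /\ sem T theta phi m') by [].
            by rewrite -e => -[].
          * have : (wf_expr SigS psi /\ sem T theta psi m') by [].
            by rewrite e => -[].
        by split => //; rewrite /t -Ess.
      - move=> [hq1 hq2]; exists psi; split => //.
        by split => //; apply: wf_Bel.
    rewrite HS; split.
    + move=> hp; split; first exact: wf_Bel.
      apply: (le_trans hp); apply: ge_sup; first by exists 0; split => //; rewrite lexx ler01.
      by move=> q [].
    + move=> [_ hp]; apply: ub_le_sup; first by exists 1 => q [/andP[]].
      by split.
  - rewrite /descr /=; split.
    + move=> h; split; first exact: wf_Conj.
      move=> a Aa; have := (IH a Aa (exist _ _ Hx)).1 (h a Aa).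
      by rewrite /descr /= => -[].
    + move=> [_ h] a Aa; apply/(IH a Aa (exist _ _ Hx)).
      by rewrite /descr /=; split; [apply: Hf | apply: h].
move=> w; apply/funext => phi; apply/propext; rewrite /descr /=; split.
  by move=> [wphi h]; apply/key.
move=> h; have wphi : wf_expr SigS phi.
  move: h; case: w => x Hx; have [M [Sig [T [theta [_ [m Ex]]]]]] := Hx; subst x => /=.
  by case.
by split => //; apply/key.
Qed.
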